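(* Let $J\subseteq\mathbb{R}$ be an interval, let $f$ be ordinal decreasing on $J$, and let $J_1,J_2$ be a partition of $J$ into two intervals with $J_1$ to the left of $J_2$. Then $o(f|_J)\le o(f|_{J_1})+o(f|_{J_2})$ (ordinal addition).
   Context: For $h:E\to\mathbb{R}$, a strictly decreasing sequence $x_1>x_2>\cdots$ in $E$ is $h$-bad if $h(x_1)>h(x_2)>\cdots$; $h$ is ordinal decreasing if there is no infinite $h$-bad sequence. For ordinal decreasing $h$, the tree $T_h$ has a vertex for each finite $h$-bad sequence (the empty sequence being the root), the parent of $\langle x_1>\cdots>x_n\rangle$ being $\langle x_1>\cdots>x_{n-1}\rangle$; each vertex gets the ordinal height $o(v)=\sup_{w\text{ child of }v}(o(w)+1)$, and $o(h)$ is the height of the root. $o(f|_D)$ denotes the ordinal type of the restriction of $f$ to $D$. *)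

(* Defs.v *)
From Stdlib Require Import Reals List.
Import ListNotations.
Open Scope R_scope.

(* Ordinals as well-founded (Aczel/Brouwer-style) trees:
   [osup I c] denotes  sup_{i : I} (c i + 1),
   i.e. exactly the recursion o(v) = sup_{w child of v} (o(w)+1). *)
Inductive ord : Type :=
| osup : forall (A : Type), (A -> ord) -> ord.

(* Ordinal order:  osup A f <= osup B g  iff  every f i + 1 <= osup B g,
   i.e. for every i there is j with f i <= g j. *)
Fixpoint ole (a b : ord) {struct a} : Prop :=
  match a with
  | osup A f => match b with
                | osup B g => forall i : A, exists j : B, ole (f i) (g j)
                end
  end.

(* Ordinal addition a + b, by recursion on b:
   a + sup_j (g j + 1) = sup ( {a} u {a + g j + 1} ); the immediate
   predecessors-generators of a + b are those of a together with a + g j. *)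
Fixpoint oadd (a b : ord) {struct b} : ord :=
  match b with
  | osup B g =>
      match a with
      | osup A f =>
          osup (A + B)%type
               (fun x => match x with
                         | inl i => f i
                         | inr j => oadd a (g j)
                         end)
      end
  end.

Fixpoint bad_seq (E : R -> Prop) (h : R -> R) (l : list R) : Prop :=
  match l with
  | nil => True
  | x :: l' =>
      E x /\
      match l' with
      | nil => True
      | y :: _ => y < x /\ h y < h x
      end /\ bad_seq E h l'
  end.

Definition ordinal_decreasing (E : R -> Prop) (h : R -> R) : Prop :=
  ~ exists s : nat -> R,
      forall n, E (s n) /\ s (S n) < s n /\ h (s (S n)) < h (s n).

(* [tree_height E h v a]: the vertex v (a finite h|_E-bad sequence) of the
   tree T_{h|_E} has ordinal height a, where
   o(v) = sup_{w child of v} (o(w) + 1), children of v being v ++ [x]. *)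
Inductive tree_height (E : R -> Prop) (h : R -> R) : list R -> ord -> Prop :=
| tree_height_intro :
    forall (v : list R)
           (c : {x : R | bad_seq E h (v ++ [x])} -> ord),
      (forall x, tree_height E h (v ++ [proj1_sig x]) (c x)) ->
      tree_height E h v (osup _ c).

Definition otype (E : R -> Prop) (h : R -> R) (a : ord) : Prop :=
  tree_height E h nil a.

Definition is_interval (J : R -> Prop) : Prop :=
  forall x y z, J x -> J z -> x <= y -> y <= z -> J y.

(* Main.v *)
Require Import Defs.
From Stdlib Require Import Reals List Classical ClassicalEpsilon Lra.
Import ListNotations.
Open Scope R_scope.

Lemma bad_app E h v x : bad_seq E h (v ++ [x]) <->
  bad_seq E h v /\ E x /\ (v = nil \/ (x < last v 0 /\ h x < h (last v 0))).
Proof.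
  induction v as [|y v IH].
  - simpl. intuition.
  - destruct v as [|z v].
    + simpl. split; [intros (Ey & Hxy & Ex & _) | intros ((Ey&_&_) & Ex & [H|H])]; try discriminate; intuition.
    + change ((y :: z :: v) ++ [x]) with (y :: ((z :: v) ++ [x])).
      change (last (y :: z :: v) 0) with (last (z :: v) 0).
      transitivity (E y /\ (z < y /\ h z < h y) /\ bad_seq E h ((z :: v) ++ [x])).
      { reflexivity. }
      rewrite IH. simpl. intuition discriminate.
Qed.

Lemma bad_sub (E F : R -> Prop) h v : (forall x, E x -> F x) -> bad_seq E h v -> bad_seq F h v.
Proof.
  intro HEF. induction v as [|y v IH]; simpl; intuition.
Qed.

Section Exist.
Variables (E : R -> Prop) (f : R -> R).
Hypothesis Hod : ordinal_decreasing E f.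

Definition P v := ~ exists a, tree_height E f v a.

Lemma step v : P v -> exists x, bad_seq E f (v ++ [x]) /\ P (v ++ [x]).
Proof.
  intro Hv. apply NNPP. intro Hn. apply Hv.
  assert (H : forall x : {x : R | bad_seq E f (v ++ [x])}, exists a, tree_height E f (v ++ [proj1_sig x]) a).
  { intros [x Hx]. simpl. apply NNPP. intro Hna. apply Hn. exists x. split; auto. }
  exists (osup _ (fun x => proj1_sig (constructive_indefinite_description _ (H x)))).
  constructor. intro x. exact (proj2_sig (constructive_indefinite_description _ (H x))).
Qed.

Definition next (w : {v | P v}) : {x : R | bad_seq E f (proj1_sig w ++ [x]) /\ P (proj1_sig w ++ [x])} :=
  constructive_indefinite_description _ (step _ (proj2_sig w)).
Definition nextw (w : {v | P v}) : {v | P v} :=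
  exist _ (proj1_sig w ++ [proj1_sig (next w)]) (proj2 (proj2_sig (next w))).

Lemma exists_height : exists a, tree_height E f nil a.
Proof.
  apply NNPP. intro H0.
  set (W := fix W n := match n with 0%nat => exist P nil H0 | S n => nextw (W n) end).
  set (s := fun n => proj1_sig (next (W n))).
  apply Hod. exists s. intro n.
  assert (B1 := proj1 (proj2_sig (next (W n)))).
  assert (B2 := proj1 (proj2_sig (next (W (S n))))).
  apply bad_app in B1. apply bad_app in B2.
  destruct B1 as (_ & Ex & _). destruct B2 as (_ & _ & [Hn|Hl]).
  - simpl in Hn. exfalso. exact (app_cons_not_nil _ _ _ (eq_sym Hn)).
  - simpl in Hl. rewrite last_last in Hl. unfold s. simpl. tauto.
Qed.
End Exist.
Section Main.
Variables (J J1 J2 : R -> Prop) (f : R -> R).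
Hypothesis HJ : forall x, J x <-> J1 x \/ J2 x.
Hypothesis Hdis : forall x, ~ (J1 x /\ J2 x).
Hypothesis Hlr : forall x y, J1 x -> J2 y -> x < y.

Lemma lemA v a : tree_height J f v a -> forall u b, tree_height J1 f u b ->
  u <> nil -> bad_seq J1 f u -> last v 0 = last u 0 -> v <> nil -> ole a b.
Proof.
  induction 1 as [v c Hc IH]. intros u b Hb Hu Hbu Hl Hv.
  destruct Hb as [u d Hd]. simpl. intros [x Hx].
  pose proof Hx as Hx'. apply bad_app in Hx'. destruct Hx' as (_ & Jx & [?|[Hx1 Hx2]]); [contradiction|].
  assert (Hb' : bad_seq J1 f (u ++ [x])).
  { apply bad_app. split; [exact Hbu|]. split.
    - assert (J1 (last u 0)).
      { destruct u as [|y u]; [congruence|]. clear -Hbu.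
        revert y Hbu. induction u as [|z u IHu]; intros y Hb; simpl in *; [tauto|].
        apply (IHu z). tauto. }
      apply HJ in Jx. destruct Jx as [?|J2x]; auto.
      exfalso. pose proof (Hlr _ _ H J2x). rewrite Hl in Hx1. lra.
    - right. rewrite <- Hl. auto. }
  exists (exist _ x Hb'). simpl.
  apply (IH (exist _ x Hx) (u ++ [x]) _ (Hd (exist _ x Hb'))); simpl.
  - intro E. exact (app_cons_not_nil _ _ _ (eq_sym E)).
  - exact Hb'.
  - rewrite !last_last. reflexivity.
  - intro E. exact (app_cons_not_nil _ _ _ (eq_sym E)).
Qed.

Lemma lemB a1 : tree_height J1 f nil a1 -> forall v a, tree_height J f v a ->
  forall b, tree_height J2 f v b -> bad_seq J2 f v -> ole a (oadd a1 b).
Proof.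
  intro H1. remember (@nil R) as nl eqn:Enl. destruct H1 as [nl g Hg]. subst nl.
  induction 1 as [v c Hc IH]. intros b Hb Hbv.
  destruct Hb as [v d Hd]. simpl. intros [x Hx].
  pose proof Hx as Hx'. apply bad_app in Hx'. destruct Hx' as (_ & Jx & Hcond).
  destruct (classic (J2 x)) as [J2x|nJ2x].
  - assert (Hb' : bad_seq J2 f (v ++ [x])) by (apply bad_app; auto).
    exists (inr (exist _ x Hb')). simpl.
    exact (IH (exist _ x Hx) _ (Hd (exist _ x Hb')) Hb').
  - assert (J1x : J1 x) by (apply HJ in Jx; tauto).
    assert (Hb' : bad_seq J1 f ([] ++ [x])) by (simpl; tauto).
    exists (inl (exist _ x Hb')). simpl.
    apply (lemA _ _ (Hc (exist _ x Hx)) [x] _ (Hg (exist _ x Hb'))); simpl.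
    + discriminate.
    + tauto.
    + rewrite last_last. reflexivity.
    + intro E. exact (app_cons_not_nil _ _ _ (eq_sym E)).
Qed.
End Main.

Theorem lemma7 (J J1 J2 : R -> Prop) (f : R -> R) :
  is_interval J -> is_interval J1 -> is_interval J2 ->
  (forall x, J x <-> J1 x \/ J2 x) ->
  (forall x, ~ (J1 x /\ J2 x)) ->
  (forall x y, J1 x -> J2 y -> x < y) ->
  ordinal_decreasing J f ->
  (exists a a1 a2, otype J f a /\ otype J1 f a1 /\ otype J2 f a2) /\
  (forall a a1 a2, otype J f a -> otype J1 f a1 -> otype J2 f a2 ->
     ole a (oadd a1 a2)).
Proof.
  intros _ _ _ HJ Hdis Hlr Hod.
  assert (Hsub : forall E, (forall x, E x -> J x) -> ordinal_decreasing E f).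
  { intros E HE [s Hs]. apply Hod. exists s. intro n. specialize (Hs n). intuition. }
  split.
  - destruct (exists_height J f Hod) as [a Ha].
    destruct (exists_height J1 f (Hsub J1 (fun x h => proj2 (HJ x) (or_introl h)))) as [a1 Ha1].
    destruct (exists_height J2 f (Hsub J2 (fun x h => proj2 (HJ x) (or_intror h)))) as [a2 Ha2].
    exists a, a1, a2. unfold otype. auto.
  - intros a a1 a2 Ha Ha1 Ha2.
    exact (lemB J J1 J2 f HJ Hlr a1 Ha1 nil a Ha a2 Ha2 I).
Qed.
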